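(* Let $\eta\in(0,1]$ be rational, $\eta=p/q$ with $p,q>0$ integers, and let $\omega(x)=\eta^{-1}$ for $x\in[0,\eta]$ and $\omega(x)=0$ for $x>\eta$. Let $f\in C^3(\mathbb{R}_+)$ satisfy $f'(\rho)\le0$ and $f(\rho)\ge0$ for all $\rho\ge0$, and suppose there is a constant $M\ge0$ with $\sup_{\rho\ge0}\big(\sum_{k=0}^3|f^{(k)}(\rho)|\big)+1\le M$. Then for every $\rho^*>0$, every $b\in\mathbb{R}$ with $|b|<\rho^*$ and every integer $k>0$, the function $$\rho(t,x)=\rho^*+b\sin\big(2kq\pi(x-f(\rho^* )t)\big),\quad t\ge0,\ x\in\mathbb{R},$$ is a solution of $$\frac{\partial\rho}{\partial t}(t,x)+\frac{\partial}{\partial x}\big(\rho(t,x)v(t,x)\big)=0,\quad v(t,x)=f\Big(\int_x^{x+\eta}\omega(s-x)\rho(t,s)\,ds\Big),\quad \rho(t,x+1)=\rho(t,x),\quad t\ge0,\ x\in\mathbb{R}.$$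
   Context: $\mathbb{R}_+=[0,+\infty)$. *)

(* Defs.v *)
From Stdlib Require Import Reals.
From Coquelicot Require Import Coquelicot.
Open Scope R_scope.

(* g' r is the derivative of g at r, relative to the domain D
   (one-sided at boundary points of D; two-sided when D = fun _ => True). *)
Definition has_deriv_within (D : R -> Prop) (g : R -> R) (g' r : R) : Prop :=
  filterlim (fun h => (g (r + h) - g r) / h)
    (within (fun h => h <> 0 /\ D (r + h)) (locally 0)) (locally g').

Definition Rplus_dom : R -> Prop := fun y => 0 <= y.

Definition cont_Rp (g : R -> R) : Prop :=
  forall r, 0 <= r -> filterlim g (within Rplus_dom (locally r)) (locally (g r)).

Definition C3_Rp (f f1 f2 f3 : R -> R) : Prop :=
  (forall r, 0 <= r -> has_deriv_within Rplus_dom f (f1 r) r) /\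
  (forall r, 0 <= r -> has_deriv_within Rplus_dom f1 (f2 r) r) /\
  (forall r, 0 <= r -> has_deriv_within Rplus_dom f2 (f3 r) r) /\
  cont_Rp f3.

(* the kernel omega(x) = 1/eta on [0,eta], 0 for x > eta (used only for x >= 0) *)
Definition omega (eta x : R) : R := if Rle_dec x eta then / eta else 0.

Definition velocity (eta : R) (f : R -> R) (rho : R -> R -> R) (t x : R) : R :=
  f (RInt (fun s => omega eta (s - x) * rho t s) x (x + eta)).

Definition is_solution (eta : R) (f : R -> R) (rho : R -> R -> R) : Prop :=
  forall t x, 0 <= t ->
    ex_RInt (fun s => omega eta (s - x) * rho t s) x (x + eta) /\
    rho t (x + 1) = rho t x /\
    exists rt fx : R,
      has_deriv_within Rplus_dom (fun tau => rho tau x) rt t /\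
      has_deriv_within (fun _ => True)
        (fun y => rho t y * velocity eta f rho t y) fx x /\
      rt + fx = 0.

(* Main.v *)
Require Import Defs.
From Stdlib Require Import Reals Lra FunctionalExtensionality.
From Coquelicot Require Import Coquelicot.
Open Scope R_scope.

Lemma deriv_to_within (D : R -> Prop) g l r :
  derivable_pt_lim g r l -> has_deriv_within D g l r.
Proof.
  intros H. unfold has_deriv_within. apply filterlim_locally. intros eps.
  destruct (H eps (cond_pos eps)) as [delta Hd].
  exists delta. intros h Hh [Hh0 _].
  change (Rabs ((g (r + h) - g r) / h - l) < eps).
  apply Hd; auto.
  change (Rabs (h - 0) < delta) in Hh. rewrite Rminus_0_r in Hh. exact Hh.
Qed.

Theorem proposition3p1 (p q : nat) (hp : (0 < p)%nat) (hq : (0 < q)%nat)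
  (heta : INR p / INR q <= 1)
  (f f1 f2 f3 : R -> R) (hf : C3_Rp f f1 f2 f3)
  (hf1 : forall r, 0 <= r -> f1 r <= 0)
  (hf0 : forall r, 0 <= r -> 0 <= f r)
  (M : R) (hM0 : 0 <= M)
  (hM : forall r, 0 <= r -> Rabs (f r) + Rabs (f1 r) + Rabs (f2 r) + Rabs (f3 r) + 1 <= M)
  (rhostar b : R) (hrho : 0 < rhostar) (hb : Rabs b < rhostar)
  (k : nat) (hk : (0 < k)%nat) :
  is_solution (INR p / INR q) f
    (fun t x => rhostar + b * sin (2 * INR k * INR q * PI * (x - f rhostar * t))).
Proof.
  set (c := f rhostar).
  set (K := 2 * INR k * INR q * PI).
  set (eta := INR p / INR q).
  assert (Hp : 0 < INR p) by (apply lt_0_INR; exact hp).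
  assert (Hq : 0 < INR q) by (apply lt_0_INR; exact hq).
  assert (Hk : 0 < INR k) by (apply lt_0_INR; exact hk).
  assert (Heta : 0 < eta) by (unfold eta; apply Rdiv_lt_0_compat; auto).
  assert (HK : 0 < K) by (unfold K; pose proof PI_RGT_0; apply Rmult_lt_0_compat; [apply Rmult_lt_0_compat; [apply Rmult_lt_0_compat|]|]; lra).
  assert (HKeta : K * eta = 2 * INR (k * p) * PI).
  { unfold K, eta. rewrite mult_INR. field. lra. }
  assert (Hint : forall t y,
    is_RInt (fun s => omega eta (s - y) * (rhostar + b * sin (K * (s - c * t)))) y (y + eta) rhostar).
  { intros t y.
    apply is_RInt_ext with (f := fun s => / eta * (rhostar + b * sin (K * (s - c * t)))).
    { intros s Hs. rewrite Rmin_left in Hs by lra. rewrite Rmax_right in Hs by lra.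
      unfold omega. destruct (Rle_dec (s - y) eta); [reflexivity | lra]. }
    set (F := fun s => / eta * (rhostar * s - b * cos (K * (s - c * t)) / K)).
    assert (HI : is_RInt (fun s => / eta * (rhostar + b * sin (K * (s - c * t)))) y (y + eta)
                   (minus (F (y + eta)) (F y))).
    { apply (@is_RInt_derive R_CompleteNormedModule F).
      - intros s _. unfold F. auto_derive; [auto|]. unfold Rminus. field. lra.
      - intros s _. apply (@ex_derive_continuous R_AbsRing R_NormedModule). auto_derive. auto. }
    assert (E : minus (F (y + eta)) (F y) = rhostar); [|rewrite E in HI; exact HI].
    unfold F, minus, plus, opp; simpl.
    replace (K * (y + eta - c * t)) with (K * (y - c * t) + 2 * INR (k * p) * PI)
      by (rewrite <- HKeta; ring).
    rewrite cos_period. field. lra. }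
  assert (Hvel : forall t y, velocity eta f
     (fun t x => rhostar + b * sin (K * (x - c * t))) t y = c).
  { intros t y. unfold velocity. rewrite (is_RInt_unique _ _ _ _ (Hint t y)). reflexivity. }
  intros t x Ht. split; [|split].
  - eexists. apply Hint.
  - replace (K * (x + 1 - c * t)) with (K * (x - c * t) + 2 * INR (k * q) * PI).
    + rewrite sin_period. reflexivity.
    + unfold K. rewrite mult_INR. ring.
  - exists (- b * cos (K * (x - c * t)) * K * c).
    exists (b * cos (K * (x - c * t)) * K * c).
    split; [|split; [|ring]].
    + apply deriv_to_within. apply is_derive_Reals. auto_derive; auto. unfold Rminus. ring.
    + replace (fun y => (rhostar + b * sin (K * (y - c * t))) *
          velocity eta f (fun t x => rhostar + b * sin (K * (x - c * t))) t y)
        with (fun y => (rhostar + b * sin (K * (y - c * t))) * c).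
      2: { apply functional_extensionality. intros y. rewrite Hvel. reflexivity. }
      apply deriv_to_within. apply is_derive_Reals. auto_derive; auto. unfold Rminus. ring.
Qed.
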